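(* Let $\Omega\subseteq\mathbb{R}^n$ be open and let $f\in\mathbb{A}(\Omega)$ be H-continuous. If there is a dense subset $D$ of $\Omega$ (not necessarily open) such that $f(x)$ is finite for every $x\in D$, then $f$ is nearly finite.
   Context: $\overline{\mathbb{R}}=\mathbb{R}\cup\{\pm\infty\}$, $\mathbb{I}\overline{\mathbb{R}}$ is the set of closed intervals $[\underline a,\overline a]$ with $\underline a\le\overline a$ in $\overline{\mathbb{R}}$, $a\in\overline{\mathbb{R}}$ identified with $[a,a]$. $\mathbb{A}(\Omega)$ is the set of functions $\Omega\to\mathbb{I}\overline{\mathbb{R}}$. An interval value $f(x)$ is finite if both endpoints are real numbers; $f$ is nearly finite if there is an open dense subset $D'$ of $\Omega$ with $f(x)$ finite for all $x\in D'$. $B_\delta(x)=\{y\in\Omega:\|x-y\|<\delta\}$. For $f\in\mathbb{A}(\Omega)$: $I(f)(x)=\sup_{\delta>0}\inf\{z\in f(y):y\in B_\delta(x)\}$, $S(f)(x)=\inf_{\delta>0}\sup\{z\in f(y):y\in B_\delta(x)\}$, $F(f)(x)=[I(f)(x),S(f)(x)]$. $f$ is H-continuous if for every $g\in\mathbb{A}(\Omega)$ with $g(x)\subseteq f(x)$ for all $x$ one has $F(g)=f$. *)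

(* Defs.v *)
From HB Require Import structures.
From mathcomp Require Import all_boot all_order all_algebra.
From mathcomp Require Import all_classical all_reals ereal.
Set Implicit Arguments. Unset Strict Implicit. Unset Printing Implicit Defensive.
Import Order.TTheory GRing.Theory Num.Theory.
Local Open Scope classical_set_scope.
Local Open Scope ring_scope.

Definition edist (R : realType) (n : nat) (x y : 'rV[R]_n) : R :=
  Num.sqrt (\sum_(i < n) (x ord0 i - y ord0 i) ^+ 2).

Definition Bdelta (R : realType) (n : nat) (Om : set 'rV[R]_n) (x : 'rV[R]_n) (d : R)
  : set 'rV[R]_n := [set y | Om y /\ edist x y < d].

Definition eopen (R : realType) (n : nat) (U : set 'rV[R]_n) : Prop :=
  forall x, U x -> exists d : R, 0 < d /\ forall y, edist x y < d -> U y.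

Definition dense_in (R : realType) (n : nat) (Om D : set 'rV[R]_n) : Prop :=
  D `<=` Om /\ forall x, Om x -> forall d : R, 0 < d -> exists y, D y /\ edist x y < d.

Record ivl (R : realType) := Ivl { lo : \bar R; hi : \bar R; lo_le_hi : (lo <= hi)%E }.

Definition in_ivl (R : realType) (z : \bar R) (a : ivl R) : Prop :=
  (lo a <= z)%E /\ (z <= hi a)%E.

Definition sub_ivl (R : realType) (a b : ivl R) : Prop :=
  forall z, in_ivl z a -> in_ivl z b.

Definition finite_ivl (R : realType) (a : ivl R) : Prop :=
  lo a \is a fin_num /\ hi a \is a fin_num.

(* Elements of A(Omega): functions Omega -> I(Rbar); values outside Omega are irrelevant. *)
Definition Ilow (R : realType) (n : nat) (Om : set 'rV[R]_n) (f : 'rV[R]_n -> ivl R)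
  (x : 'rV[R]_n) : \bar R :=
  ereal_sup [set ereal_inf [set z | exists y, Bdelta Om x d y /\ in_ivl z (f y)]
            | d in [set d : R | 0 < d]].

Definition Supp (R : realType) (n : nat) (Om : set 'rV[R]_n) (f : 'rV[R]_n -> ivl R)
  (x : 'rV[R]_n) : \bar R :=
  ereal_inf [set ereal_sup [set z | exists y, Bdelta Om x d y /\ in_ivl z (f y)]
            | d in [set d : R | 0 < d]].

Definition Hcont (R : realType) (n : nat) (Om : set 'rV[R]_n) (f : 'rV[R]_n -> ivl R) : Prop :=
  forall g : 'rV[R]_n -> ivl R,
    (forall x, Om x -> sub_ivl (g x) (f x)) ->
    forall x, Om x -> Ilow Om g x = lo (f x) /\ Supp Om g x = hi (f x).

Definition nearly_finite (R : realType) (n : nat) (Om : set 'rV[R]_n) (f : 'rV[R]_n -> ivl R) : Prop :=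
  exists D' : set 'rV[R]_n, D' `<=` Om /\ eopen D' /\ dense_in Om D' /\
    forall x, D' x -> finite_ivl (f x).

(* Main.v *)
Require Import Defs.
From mathcomp Require Import all_boot all_order all_algebra.
From mathcomp Require Import all_classical all_reals ereal.
Import Order.TTheory GRing.Theory Num.Theory.
Local Open Scope classical_set_scope.
Local Open Scope ring_scope.

Lemma hi_loc (R : realType) (n : nat) (Om : set 'rV[R]_n) (f : 'rV[R]_n -> ivl R) x :
  Supp Om f x = hi (f x) -> (hi (f x) < +oo)%E ->
  exists d : R, 0 < d /\ forall y, Om y -> edist x y < d -> (hi (f y) < +oo)%E.
Proof.
move=> E H; rewrite -E in H.
have [y0 [d d0 <-] ylt] := ereal_inf_lt H.
exists d; split => // y Oy xy.
apply: le_lt_trans ylt; apply: ereal_sup_ubound.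
exists y; split; first by split.
by split; [exact: lo_le_hi|].
Qed.

Lemma lo_loc (R : realType) (n : nat) (Om : set 'rV[R]_n) (f : 'rV[R]_n -> ivl R) x :
  Ilow Om f x = lo (f x) -> (-oo < lo (f x))%E ->
  exists d : R, 0 < d /\ forall y, Om y -> edist x y < d -> (-oo < lo (f y))%E.
Proof.
move=> E H; rewrite -E in H.
have [y0 [d d0 <-] ylt] := ereal_sup_gt H.
exists d; split => // y Oy xy.
apply: lt_le_trans ylt _; apply: ereal_inf_lbound.
exists y; split; first by split.
by split; [|exact: lo_le_hi].
Qed.

Theorem theorem22 (R : realType) (n : nat) (Om : set 'rV[R]_n) (f : 'rV[R]_n -> ivl R) :
  eopen Om -> Hcont Om f ->
  (exists D : set 'rV[R]_n, dense_in Om D /\ forall x, D x -> finite_ivl (f x)) ->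
  nearly_finite Om f.
Proof.
move=> Oo Hc [D [[DO Dd] Df]].
have Hf := Hc f (fun x _ z h => h).
exists [set x | Om x /\ (hi (f x) < +oo)%E /\ (-oo < lo (f x))%E].
split; first by move=> x [].
split.
  move=> x [Ox [h l]].
  have [Hl Hh] := Hf x Ox.
  have [d1 [d10 P1]] := (@hi_loc R n Om f x Hh h).
  have [d2 [d20 P2]] := (@lo_loc R n Om f x Hl l).
  have [d3 [d30 P3]] := Oo x Ox.
  exists (Num.min d1 (Num.min d2 d3)); split.
    by rewrite !lt_min d10 d20 d30.
  move=> y; rewrite !lt_min => /andP[y1 /andP[y2 y3]].
  have Oy := P3 y y3.
  by split => //; split; [exact: P1|exact: P2].
split.
  split; first by move=> x [].
  move=> x Ox d d0.
  have [y [Dy xy]] := Dd x Ox d d0.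
  exists y; split => //.
  have [/fin_numP[l1 l2] /fin_numP[h1 h2]] := Df y Dy.
  split; first exact: DO.
  by rewrite ltey ltNye.
move=> x [_ [h l]].
split; apply/fin_numP; split.
- by rewrite -ltNye.
- by rewrite -ltey; apply: le_lt_trans h; exact: lo_le_hi.
- by rewrite -ltNye; apply: lt_le_trans l _; exact: lo_le_hi.
- by rewrite -ltey.
Qed.
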